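(* Let $M$ be a regular indecomposable module which is a sink module with radius $r$. Then $r\ge 1$ and there is an integer $i$ with $1\le i\le r$ such that $\sigma^iM$ is a flow module or a source module.
   Context: Let $k$ be a field and $n\ge 3$. $T(n)$ is the $n$-regular tree; fix a bipartite orientation $\Omega$ (every vertex a sink or a source), $\sigma\Omega$ the opposite orientation. A module is a finite-dimensional $k$-representation of $(T(n),\Omega)$ or $(T(n),\sigma\Omega)$. The shift functor $\sigma$ is the composition of the Bernstein–Gelfand–Ponomarev reflection functors at all sinks, sending representations of $(T(n),\Omega)$ to those of $(T(n),\sigma\Omega)$ and vice versa. An indecomposable module $M$ is regular if $\sigma^tM\neq 0$ for all $t\in\mathbb Z$ ($\sigma^t$ for $t<0$ being powers of the left adjoint $\sigma^-$). For indecomposable $M$, $T(M)$ is the full subgraph of $T(n)$ on vertices $a$ with $M_a\neq0$; a diameter path is a path (sequence of vertices, consecutive ones neighbours, no immediate backtracking) in $T(M)$ of maximal length $d(M)$; $r(M)=\lfloor d(M)/2\rfloor$. $M$ is a sink (resp. source) module if its diameter paths start and end at sinks (resp. sources) of the orientation of its quiver, and a flow module if $d(M)$ is odd. *)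

(* Defs.v *)
From HB Require Import structures.
From mathcomp Require Import all_boot all_order all_algebra.
Set Implicit Arguments. Unset Strict Implicit. Unset Printing Implicit Defensive.
Import GRing.Theory.
Local Open Scope ring_scope.

(* The n-regular tree T(n): vertices are reduced words in n letters (no   *)
(* two consecutive equal letters), i.e. elements of the free product of n *)
(* copies of Z/2 (Cayley graph).  A word is stored REVERSED: the head of  *)
(* the list is the last letter.  The j-th neighbour of w is w * s_j.      *)
Section Tree.
Variable n : nat.

Definition reduced (w : seq 'I_n) : bool := sorted (fun x y => x != y) w.

Definition vertex := {w : seq 'I_n | reduced w}.

Definition nbs (w : seq 'I_n) (j : 'I_n) : seq 'I_n :=
  if w is j' :: w' then (if j' == j then w' else j :: w) else [:: j].

Lemma nbs_reduced (w : seq 'I_n) (j : 'I_n) : reduced w -> reduced (nbs w j).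
Proof.
case: w => [|j' w'] //= H.
case: eqP => [_|ne].
  by move: H; rewrite /reduced /=; apply: path_sorted.
rewrite /reduced /= H andbT; apply/eqP => E; apply: ne; by rewrite E.
Qed.

Definition nb (v : vertex) (j : 'I_n) : vertex :=
  exist _ (nbs (val v) j) (nbs_reduced j (valP v)).

Definition root : vertex := exist _ [::] isT.

Definition adj (u v : vertex) : bool := [exists j, nb u j == v].

Fixpoint nobt (s : seq vertex) : bool :=
  match s with
  | x :: ((y :: z :: _) as t) => (x != z) && nobt t
  | _ => true
  end.

End Tree.

(* Representations of (T(n), orientation).  The orientation is bipartite: *)
(* with orient = p, the sinks are the vertices v with odd |v| == p, all    *)
(* others are sources.  p = false is the fixed orientation Omega, p = true *)
(* is sigma Omega.  The space at v is F^(dim v) (row vectors); for a       *)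
(* SOURCE u, amap u j : 'M_(dim u, dim (nb u j)) is the linear map along   *)
(* the arrow u -> nb u j  (x |-> x *m amap u j).  The values of amap at    *)
(* sinks are irrelevant and are ignored by every definition below.         *)
Record rep (F : fieldType) (n : nat) := Rep {
  orient : bool;
  dim : vertex n -> nat;
  amap : forall (u : vertex n) (j : 'I_n), 'M[F]_(dim u, dim (nb u j))
}.

Section Reps.
Variables (F : fieldType) (n : nat).
Implicit Types (M : rep F n) (u v : vertex n).

Definition sinkb M v : bool := odd (size (val v)) == orient M.

Definition nonzero M : Prop := exists v, (0 < dim M v)%N.

Definition fin_dim M : Prop :=
  exists s : seq (vertex n), forall v, v \notin s -> dim M v = 0%N.

(* the map  (+)_j M_(nb a j) --> M_a  at a sink a (column block matrix) *)
Definition in_mx M (a : vertex n) : 'M[F]_(\sum_(j < n) dim M (nb a j), dim M a) :=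
  @mxcol F n (fun j => dim M (nb a j)) (dim M a)
    (fun j => conform_mx (0 : 'M_(dim M (nb a j), dim M a)) (amap M (nb a j) j)).

Definition out_mx M (b : vertex n) : 'M[F]_(dim M b, \sum_(j < n) dim M (nb b j)) :=
  @mxrow F n (fun j => dim M (nb b j)) (dim M b) (fun j => amap M b j).




Arguments in_mx : clear implicits.
Arguments out_mx : clear implicits.

Definition sigma_dim M (v : vertex n) : nat :=
  if sinkb M v then \rank (kermx (in_mx M v)) else dim M v.

Definition sigma M : rep F n :=
  @Rep F n (~~ orient M) (sigma_dim M)
    (fun u j =>
       if sinkb M u then
         conform_mx (0 : 'M_(sigma_dim M u, sigma_dim M (nb u j)))
           (@submxrow F n (fun i => dim M (nb u i)) _
              (row_base (kermx (in_mx M u))) j)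
       else 0).

(* quotient map (+)_j M_(nb b j) -> coker (out_mx b), with target of        *)
(* dimension = rank; its left kernel is exactly the image of out_mx b.      *)
Definition coker_proj M (b : vertex n) :
  'M[F]_(\sum_(j < n) dim M (nb b j), \rank (cokermx (out_mx M b))^T) :=
  (row_base (cokermx (out_mx M b))^T)^T.



Arguments coker_proj : clear implicits.

Definition sigmam_dim M (v : vertex n) : nat :=
  if ~~ sinkb M v then \rank (cokermx (out_mx M v))^T else dim M v.

Definition sigmam M : rep F n :=
  @Rep F n (~~ orient M) (sigmam_dim M)
    (fun a j =>
       if sinkb M a then
         conform_mx (0 : 'M_(sigmam_dim M a, sigmam_dim M (nb a j)))
           (@submxcol F n (fun i => dim M (nb (nb a j) i)) _
              (coker_proj M (nb a j)) j)
       else 0).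

Definition decomposition M (U W : forall v, 'M[F]_(dim M v)) : Prop :=
  (forall v, (U v + W v == 1%:M)%MS /\ (U v :&: W v <= (0 : 'M_(dim M v)))%MS) /\
  (forall u j, ~~ sinkb M u ->
     (U u *m amap M u j <= U (nb u j))%MS /\ (W u *m amap M u j <= W (nb u j))%MS).

Arguments decomposition : clear implicits.


Definition indecomposable M : Prop :=
  nonzero M /\
  forall U W, decomposition M U W -> (forall v, U v = 0) \/ (forall v, W v = 0).

(* regular: sigma^t M <> 0 for all t in Z *)
Definition regular M : Prop :=
  forall t : nat, nonzero (iter t sigma M) /\ nonzero (iter t sigmam M).

Definition supp M (v : vertex n) : bool := (0 < dim M v)%N.

(* a path in T(M): nonempty, consecutive vertices neighbours, inside the
   support, no immediate backtracking; its length is (size s).-1 *)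
Definition tpath M (s : seq (vertex n)) : bool :=
  if s is x :: s' then [&& path (@adj n) x s', all (supp M) s & nobt s]
  else false.

Definition diam_path M (s : seq (vertex n)) : Prop :=
  tpath M s /\ forall t, tpath M t -> (size t <= size s)%N.

Definition sink_module M : Prop :=
  (exists s, diam_path M s) /\
  forall s, diam_path M s ->
    sinkb M (head (root n) s) /\ sinkb M (last (root n) s).

Definition source_module M : Prop :=
  (exists s, diam_path M s) /\
  forall s, diam_path M s ->
    ~~ sinkb M (head (root n) s) /\ ~~ sinkb M (last (root n) s).

Definition flow_module M : Prop :=
  exists s, diam_path M s /\ odd (size s).-1.

End Reps.

(* Main.v *)
Require Import Defs.
From HB Require Import structures.
From mathcomp Require Import all_boot all_order all_algebra.
From mathcomp Require Import zify.
From Stdlib Require Import Classical.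
Import Defs.
Set Implicit Arguments. Unset Strict Implicit. Unset Printing Implicit Defensive.
Import GRing.Theory.

Section TreeL.
Variable n : nat.
Implicit Types (u v w : vertex n) (j : 'I_n).

Lemma nbsK (w : seq 'I_n) j : reduced w -> nbs (nbs w j) j = w.
Proof.
case: w => [|j' w'] /=; first by rewrite eqxx.
case: eqP => [->|ne] /= H; last by rewrite eqxx.
case: w' H => [|k w''] //= /andP[H _]; rewrite eq_sym (negbTE H) //.
Qed.

Lemma nbK v j : nb (nb v j) j = v.
Proof. by apply: val_inj; rewrite /= nbsK // (valP v). Qed.

Lemma nb_inj v : injective (nb v).
Proof.
move=> j1 j2 /(congr1 val) /=; case: (val v) => [|k w] /=; first by case.
case: (eqVneq k j1) => [<-|ne1]; case: (eqVneq k j2) => [<-|ne2] //.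
- move=> E; have: size w = size (j2 :: k :: w) by rewrite -E. by rewrite /=; lia.
- move=> E; have: size (j1 :: k :: w) = size w by rewrite E. by rewrite /=; lia.
- by case.
Qed.

Lemma size_nb v j : size (val (nb v j)) = (size (val v)).+1 \/ (size (val v) = (size (val (nb v j))).+1).
Proof.
rewrite /=; case: (val v) => [|k w] /=; first by left.
by case: eqP => _; [right|left].
Qed.

Lemma odd_nb v j : odd (size (val (nb v j))) = ~~ odd (size (val v)).
Proof. by case: (size_nb v j) => ->; rewrite /= ?negbK. Qed.

Lemma sinkb_nb (F : fieldType) (X : rep F n) v j : sinkb X (nb v j) = ~~ sinkb X v.
Proof. by rewrite /sinkb odd_nb; case: (odd _); case: (orient X). Qed.

Lemma adjP u v : reflect (exists j, v = nb u j) (adj u v).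
Proof.
apply: (iffP existsP) => [[j /eqP <-]|[j ->]]; by exists j.
Qed.

Lemma adj_sym u v : adj u v -> adj v u.
Proof. by move/adjP=> [j ->]; apply/adjP; exists j; rewrite nbK. Qed.

End TreeL.

Section Walks.
Variable n : nat.
Implicit Types (u v w x y : vertex n) (j : 'I_n) (s : seq (vertex n)).

Lemma step_cases x j :
  val (nb x j) = j :: val x \/ (size (val x) = (size (val (nb x j))).+1 /\ ohead (val x) = Some j).
Proof.
rewrite /=; case: (val x) => [|k w] /=; first by left.
by case: eqP => [->|_]; [right|left].
Qed.

Lemma push_all x s : path (@adj n) x s -> nobt (x :: s) ->
  forall y s', s = y :: s' -> (exists j, val y = j :: val x) ->
  size (val (last x s)) = size (val x) + size s.
Proof.
elim: s x => [|y s IH] x //= /andP[axy ps] nb1 y' s' [<- _] [j hj].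
case: s IH ps nb1 => [|z s] IH ps nb1 /=; first by rewrite hj /= addn1.
move: nb1 => /andP[xz nb2].
have := IH y ps nb2 z s erefl.
move: ps => /andP[/adjP[k ez] _]; subst z.
case: (step_cases y k) => [hk|[_ hk]].
  by move=> /(_ (ex_intro _ k hk)) /= ->; rewrite hj /=; lia.
exfalso; move: xz hk; rewrite -[\val y]/(sval y) hj /= => xz [hk].
have : nb y k = x.
  by apply: val_inj; rewrite /= -[\val y]/(sval y) hj hk /= eqxx.
by move=> E; move: xz; rewrite E eqxx.
Qed.

Lemma walk_bound x s : path (@adj n) x s -> nobt (x :: s) ->
  size s <= size (val x) + size (val (last x s)).
Proof.
elim: s x => [|y s IH] x //= /andP[axy ps] nb1.
move/adjP: (axy) => [j ey].
case: (step_cases x j) => [hp|[hs _]].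
  have := @push_all x (y :: s) => /(_ _ _ y s erefl).
  rewrite /= axy ps => /(_ isT nb1) -> //; last by exists j; rewrite ey.
  lia.
have nb2 : nobt (y :: s) by case: s nb1 {IH ps} => // z [|t s] /= => [//|/andP[]].
have := IH y ps nb2; rewrite -ey in hs; move: hs; cbn; lia.
Qed.

Lemma parity (F : fieldType) (X : rep F n) x s : path (@adj n) x s ->
  sinkb X (last x s) = sinkb X x (+) odd (size s).
Proof.
elim: s x => [|y s IH] x /=; first by rewrite addbF.
move=> /andP[/adjP[j ->] ps]; rewrite (IH _ ps) sinkb_nb.
by case: (sinkb X x); case: (odd _).
Qed.

End Walks.

Local Open Scope ring_scope.

Section Lin.
Variables (F : fieldType) (n : nat).
Implicit Types (X : rep F n) (u v a b : vertex n) (j : 'I_n).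

Lemma submx_degen m k p (A : 'M[F]_(m, k)) (B : 'M[F]_(p, k)) :
  (m = 0%N \/ k = 0%N) -> (A <= B)%MS.
Proof.
move=> h; have /eqP-> : A == 0; last exact: sub0mx.
rewrite -mxrank_eq0 -leqn0; case: h => <-; [exact: rank_leq_row | exact: rank_leq_col].
Qed.

Lemma one_eq0 m : (1%:M : 'M[F]_m) = 0 -> m = 0%N.
Proof. by move=> h; have := mxrank1 F m; rewrite h mxrank0. Qed.

Lemma block_le p (p_ : 'I_p -> nat) k (B_ : forall i, 'M[F]_(p_ i, k)) i :
  (B_ i <= \mxcol_i B_ i)%MS.
Proof.
by rewrite -{1}(mxcolK B_ i) /submxcol rowsubE submxMl.
Qed.

Lemma amap_conf X u j u' (e : u' = u) :
  (amap X u j <= conform_mx (0 : 'M_(dim X u', dim X (nb u j))) (amap X u' j))%MS.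
Proof. by subst u'; rewrite conform_mx_id submx_refl. Qed.

Lemma amap_le_in X u j : (amap X u j <= in_mx X (nb u j))%MS.
Proof.
apply: submx_trans (amap_conf X j (nbK u j)) _.
exact: (block_le (fun i => conform_mx (0 : 'M_(dim X (nb (nb u j) i), dim X (nb u j))) (amap X (nb (nb u j) i) i)) j).
Qed.

Lemma sinkb_sigma X v : sinkb (sigma X) v = ~~ sinkb X v.
Proof. by rewrite /sinkb /=; case: (odd _); case: (orient X). Qed.

Lemma dim_sigma_src X v : ~~ sinkb X v -> dim (sigma X) v = dim X v.
Proof. by move=> h; rewrite /= /sigma_dim (negbTE h). Qed.

Lemma dim_sigma_sink X v : sinkb X v ->
  dim (sigma X) v = ((\sum_(j < n) dim X (nb v j)) - \rank (in_mx X v))%N.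
Proof. by move=> h; rewrite /= /sigma_dim h mxrank_ker. Qed.

Lemma dim_sigma_sink_le X v : sinkb X v -> (dim (sigma X) v <= \sum_(j < n) dim X (nb v j))%N.
Proof. by move=> h; rewrite dim_sigma_sink // leq_subr. Qed.

Lemma dim_sigma_sink_ge X v : sinkb X v ->
  ((\sum_(j < n) dim X (nb v j)) - dim X v <= dim (sigma X) v)%N.
Proof. by move=> h; rewrite dim_sigma_sink // leq_sub2l // rank_leq_col. Qed.

Lemma sigma_zero X : (forall v, ~~ sinkb X v -> dim X v = 0%N) ->
  forall v, dim (sigma X) v = 0%N.
Proof.
move=> h v; case: (boolP (sinkb X v)) => hv; last by rewrite dim_sigma_src // h.
apply/eqP; rewrite -leqn0; apply: leq_trans (dim_sigma_sink_le hv) _.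
rewrite leqn0 sum_nat_eq0; apply/forallP => j; apply/implyP => _.
by rewrite h // sinkb_nb hv.
Qed.

Lemma sum_pos (f : 'I_n -> nat) j : (0 < f j)%N -> (0 < \sum_(i < n) f i)%N.
Proof. by move=> h; rewrite (bigD1 j) //= ltn_addr. Qed.

End Lin.

Section Ind.
Variables (F : fieldType) (n : nat).
Implicit Types (X : rep F n) (u v a b : vertex n) (j : 'I_n).

Lemma split_pred X (P : pred (vertex n)) : indecomposable X ->
  (forall u j, ~~ sinkb X u -> P u != P (nb u j) -> dim X u = 0%N \/ dim X (nb u j) = 0%N) ->
  (forall v, P v -> dim X v = 0%N) \/ (forall v, ~~ P v -> dim X v = 0%N).
Proof.
move=> [_ hind] hP.
pose U := fun v => if P v then (1%:M : 'M[F]_(dim X v)) else 0.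
pose W := fun v => if P v then 0 else (1%:M : 'M[F]_(dim X v)).
have hd : decomposition U W.
  split.
    move=> v; rewrite /U /W; case: (P v).
      split; last by rewrite capmx0 submx_refl.
      by rewrite addsmx0_id; apply/andP; split; apply: submx_refl.
    split; last by rewrite cap0mx submx_refl.
    by rewrite adds0mx_id; apply/andP; split; apply: submx_refl.
  move=> u j hu; rewrite /U /W.
  case: (eqVneq (P u) (P (nb u j))) => [E|ne].
    by rewrite E; case: (P (nb u j)); split; rewrite ?mul0mx ?sub0mx ?submx1.
  have := hP u j hu ne => h.
  by split; apply: submx_degen; case: h => h; [left|right|left|right].
case: (hind U W hd) => h; [left|right] => v hv; apply: one_eq0; have := h v.
  by rewrite /U /= hv => E; exact: E.
by rewrite /W /= (negbTE hv) => E; exact: E.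
Qed.


Lemma surj X : indecomposable X -> nonzero (sigma X) ->
  forall a, sinkb X a -> row_full (in_mx X a).
Proof.
move=> hX hs.
pose U := fun v => if sinkb X v then (in_mx X v)^C%MS else (0 : 'M[F]_(dim X v)).
pose W := fun v => if sinkb X v then <<in_mx X v>>%MS else (1%:M : 'M[F]_(dim X v)).
have hd : decomposition U W.
  split.
    move=> v; rewrite /U /W; case: (sinkb X v).
      split.
        apply/andP; split; first exact: submx1.
        rewrite sub1mx addsmxC.
        have E := adds_eqmx (genmxE (in_mx X v)) (eqmx_refl (in_mx X v)^C%MS).
        by rewrite /row_full E -/(row_full _) addsmx_compl_full.
      rewrite capmxC.
      have E := cap_eqmx (genmxE (in_mx X v)) (eqmx_refl (in_mx X v)^C%MS).
      by rewrite E capmx_compl submx_refl.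
    split; last by rewrite cap0mx submx_refl.
    by rewrite adds0mx_id; apply/andP; split; apply: submx_refl.
  move=> u j hu; rewrite /U /W /= (negbTE hu) sinkb_nb hu /=.
  split; first by rewrite mul0mx sub0mx.
  by rewrite mul1mx genmxE amap_le_in.
case: hX => _ hind.
case: (hind U W hd) => h.
  move=> a ha; have := h a; rewrite /U /= ha => /eqP.
  rewrite -mxrank_eq0 mxrank_compl subn_eq0 => le.
  by rewrite /row_full eqn_leq rank_leq_col.
exfalso; case: hs => v; rewrite sigma_zero //.
move=> w hw; apply: one_eq0; have := h w; rewrite /W /= (negbTE hw) => E; exact: E.
Qed.

End Ind.

Section Conn.
Variables (F : fieldType) (n : nat).
Implicit Types (X : rep F n) (u v a b c : vertex n) (j : 'I_n).

Fixpoint dir (p s : seq 'I_n) : option 'I_n :=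
  match p, s with
  | [::], [::] => None
  | [::], x :: _ => Some x
  | x :: p', y :: s' => if x == y then dir p' s' else None
  | _ :: _, [::] => None
  end.

Lemma dir_nil p : dir p [::] = None.
Proof. by case: p. Qed.

Lemma dir_rcons p s j : s != p -> rcons s j != p -> dir p (rcons s j) = dir p s.
Proof.
elim: p s => [|x p IH] [|y s] //=.
  by move=> _ _; rewrite dir_nil; case: (x == j).
move=> h1 h2; case: ifP => // /eqP E; subst y.
by apply: IH; [move: h1 | move: h2]; rewrite eqseq_cons eqxx.
Qed.

Lemma dir_push p j : dir p (rcons p j) = Some j.
Proof. by elim: p => [|x p IH] //=; rewrite eqxx. Qed.

Lemma dir_pop q j : dir (rcons q j) q = None.
Proof. by elim: q => [|x q IH] //=; rewrite eqxx. Qed.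

Definition ext c u := dir (rev (val c)) (rev (val u)).

Lemma pop_eq u j : ohead (val u) = Some j -> val u = j :: val (nb u j).
Proof.
rewrite /=; case: (val u) => [|k w] //= [->]; by rewrite eqxx.
Qed.

Lemma rev_neq u v : u != v -> rev (val u) != rev (val v).
Proof. by apply: contra => /eqP /(congr1 rev); rewrite !revK => /val_inj ->. Qed.

Lemma ext_inv c u j : u != c -> nb u j != c -> ext c (nb u j) = ext c u.
Proof.
move=> h1 h2; rewrite /ext.
case: (step_cases u j) => [hp|[_ hp]].
  rewrite -[\val (nb u j)]/(sval (nb u j)) hp rev_cons dir_rcons //.
    exact: rev_neq.
  by move/rev_neq: h2; rewrite -[\val (nb u j)]/(sval (nb u j)) hp rev_cons.
have E := pop_eq hp.
rewrite -[\val u]/(sval u) E rev_cons dir_rcons //.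
  exact: rev_neq.
by rewrite -rev_cons -E; apply: rev_neq.
Qed.

Lemma ext_nb c j : ext c (nb c j) = Some j \/ ((ohead (val c) = Some j) /\ ext c (nb c j) = None).
Proof.
rewrite /ext; case: (step_cases c j) => [hp|[_ hp]].
  by left; rewrite -[\val (nb c j)]/(sval (nb c j)) hp rev_cons dir_push.
right; split => //; have E := pop_eq hp.
by rewrite -[\val c]/(sval c) E rev_cons dir_pop.
Qed.

Lemma nb_neq v j : nb v j != v.
Proof.
apply/eqP => /(congr1 (fun w => size (val w))) /= E; case: (size_nb v j); rewrite /= E; lia.
Qed.

Lemma connected X c j1 j2 : indecomposable X -> dim X c = 0%N -> j1 != j2 ->
  dim X (nb c j1) = 0%N \/ dim X (nb c j2) = 0%N.
Proof.
move=> hX hc hj.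
pose P := fun w => (w != c) && (ext c w == ext c (nb c j1)).
have := @split_pred F n X P hX.
case.
- move=> u j _ hne.
  case: (eqVneq u c) => [->|uc]; first by left.
  case: (eqVneq (nb u j) c) => [->|nc]; first by right.
  by move: hne; rewrite /P /= uc nc /= (ext_inv uc nc) eqxx.
- by move=> h; left; apply: h; rewrite /P nb_neq eqxx.
- move=> h; right; apply: h; rewrite /P negb_and negbK.
  apply/orP; right; apply/eqP.
  case: (ext_nb c j1) => [->|[h1 ->]]; case: (ext_nb c j2) => [->|[h2 ->]] //.
  + by case=> E; move: hj; rewrite E eqxx.
  + by move: hj; rewrite h1 in h2; case: h2 => ->; rewrite eqxx.
Qed.

Lemma single X v : indecomposable X -> (0 < dim X v)%N ->
  (forall u j, (0 < dim X u)%N -> dim X (nb u j) = 0%N) ->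
  forall w, w != v -> dim X w = 0%N.
Proof.
move=> hX hv hadj.
have := @split_pred F n X (fun w => w == v) hX.
case.
- move=> u j _; case: (eqVneq u v) => [->|uv] /=; first by move=> _; right; exact: hadj.
  case: (eqVneq (nb u j) v) => [E|] //= _; left.
  apply/eqP; rewrite -leqn0 leqNgt; apply/negP => /(hadj u j); rewrite E => h.
  by move: hv; rewrite h.
- by move=> h; move: hv; rewrite h.
- by [].
Qed.

End Conn.

Section MxL.
Variable F : fieldType.

Section Blocks.
Variables (p : nat) (p_ : 'I_p -> nat).
Local Notation sp := (\sum_i p_ i)%N.

Lemma diag_subP k (x : 'M[F]_(k, sp)) (B : forall i, 'M[F]_(p_ i)) :
  (x <= \mxdiag_i B i)%MS <-> (forall i, (submxrow x i <= B i)%MS).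
Proof.
split.
  case/submxP => y ->{x} i.
  rewrite -(submxrowK y) mul_mxrow_mxdiag mxrowK; exact: submxMl.
move=> h; rewrite -(submxrowK x).
have -> : \mxrow_i submxrow x i = \mxrow_i (submxrow x i *m pinvmx (B i)) *m \mxdiag_i B i.
  by rewrite mul_mxrow_mxdiag; apply: eq_mxrow => i; rewrite mulmxKpV.
exact: submxMl.
Qed.

Lemma diag_direct (A B : forall i, 'M[F]_(p_ i)) :
  (forall i, (A i + B i == 1%:M)%MS /\ (A i :&: B i <= (0 : 'M_(p_ i)))%MS) ->
  ((\mxdiag_i A i) + (\mxdiag_i B i) == 1%:M)%MS /\
  ((\mxdiag_i A i) :&: (\mxdiag_i B i) <= (0 : 'M_sp))%MS.
Proof.
move=> h.
have hcap : ((\mxdiag_i A i) :&: (\mxdiag_i B i) <= (0 : 'M_sp))%MS.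
  set x := (_ :&: _)%MS.
  have hA : (x <= \mxdiag_i A i)%MS by exact: capmxSl.
  have hB : (x <= \mxdiag_i B i)%MS by exact: capmxSr.
  have -> : x = 0; last exact: submx_refl.
  rewrite -(submxrowK x) -(mxrow0 (q_ := p_)); apply: eq_mxrow => i.
  apply/eqP; rewrite -submx0; apply: submx_trans (proj2 (h i)).
  by rewrite sub_capmx (proj1 (diag_subP _ _) hA) (proj1 (diag_subP _ _) hB).
split => //; apply/andP; split; first exact: submx1.
rewrite sub1mx /row_full; apply/eqP.
have := mxrank_sum_cap (\mxdiag_i A i) (\mxdiag_i B i).
have E : \rank (\mxdiag_i A i :&: \mxdiag_i B i)%MS = 0%N.
  by apply/eqP; rewrite mxrank_eq0 -submx0.
rewrite E addn0 !rank_mxdiag -big_split /= => ->.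
apply: eq_bigr => i _.
have := mxrank_sum_cap (A i) (B i).
have E1 : \rank (A i :&: B i)%MS = 0%N.
  by apply/eqP; rewrite mxrank_eq0 -submx0 (proj2 (h i)).
have E2 : \rank (A i + B i)%MS = p_ i.
  by apply/eqP; rewrite -/(row_full _) -sub1mx; case/andP: (proj1 (h i)).
by rewrite E1 E2 addn0.
Qed.


Lemma sink_alg d rho (A : 'M[F]_(sp, d)) (RB : 'M[F]_(rho, sp))
  (CU CW : forall i, 'M[F]_(p_ i)) (Ua Wa : 'M[F]_rho) :
  row_full A -> (RB <= kermx A)%MS -> (kermx A <= RB)%MS ->
  (forall i, (CU i + CW i == 1%:M)%MS /\ (CU i :&: CW i <= (0 : 'M_(p_ i)))%MS) ->
  (Ua + Wa == 1%:M)%MS ->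
  (forall i, (Ua *m submxrow RB i <= CU i)%MS) ->
  (forall i, (Wa *m submxrow RB i <= CW i)%MS) ->
  ((\mxdiag_i CU i) *m A + (\mxdiag_i CW i) *m A == 1%:M)%MS /\
  ((\mxdiag_i CU i) *m A :&: (\mxdiag_i CW i) *m A <= (0 : 'M_d))%MS.
Proof.
move=> hA hRK hKR h hUW hU hW.
set DU := \mxdiag_i CU i; set DW := \mxdiag_i CW i.
have [hs hc] := diag_direct h.
have hUa : (Ua *m RB <= DU)%MS.
  by apply/diag_subP => i; rewrite -mul_submxrow.
have hWa : (Wa *m RB <= DW)%MS.
  by apply/diag_subP => i; rewrite -mul_submxrow.
split.
  apply/andP; split; first exact: submx1.
  apply: submx_trans (_ : (1%:M <= A)%MS) _; first by rewrite sub1mx.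
  rewrite -addsmxMr -{1}[A]mul1mx submxMr //; by case/andP: hs.
set x := (_ :&: _)%MS.
have /submxP [P hP] : (x <= DU *m A)%MS by exact: capmxSl.
have /submxP [Q hQ] : (x <= DW *m A)%MS by exact: capmxSr.
have hk : (P *m DU - Q *m DW) *m A = 0.
  by rewrite mulmxBl -!mulmxA -hP -hQ subrr.
have /submxP [R hR] : (P *m DU - Q *m DW <= RB)%MS.
  by apply: submx_trans hKR; apply/sub_kermxP.
have : (R <= Ua + Wa)%MS.
  by apply: submx_trans (submx1 R) _; case/andP: hUW.
case/sub_addsmxP => [[r1 r2] /= hr].
set z := P *m DU + (- r1) *m (Ua *m RB).
have hz1 : (z <= DU)%MS by rewrite addmx_sub // ?submxMl // (submx_trans (submxMl _ _) hUa).
have hz : z = Q *m DW + r2 *m (Wa *m RB).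
  rewrite /z mulNmx !mulmxA -[P *m DU](subrK (Q *m DW)) hR hr mulmxDl.
  move: (r1 *m Ua *m RB) (r2 *m Wa *m RB) (Q *m DW) => a b c.
  by rewrite addrAC [a + b]addrC addrK addrC.
have hz2 : (z <= DW)%MS by rewrite hz addmx_sub // ?submxMl // (submx_trans (submxMl _ _) hWa).
have z0 : z = 0.
  apply/eqP; rewrite -submx0; apply: submx_trans hc; by rewrite sub_capmx hz1 hz2.
have hRB : RB *m A = 0 by apply/sub_kermxP.
have -> : x = 0.
  rewrite hP mulmxA; move: z0; rewrite /z mulNmx => /eqP; rewrite addr_eq0 opprK => /eqP ->.
  by rewrite -!mulmxA hRB !mulmx0.
exact: submx_refl.
Qed.

Lemma sink_zero rho (RB : 'M[F]_(rho, sp)) (CU : forall i, 'M[F]_(p_ i)) (Ua : 'M[F]_rho) :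
  row_free RB -> (forall i, CU i = 0) -> (forall i, (Ua *m submxrow RB i <= CU i)%MS) -> Ua = 0.
Proof.
move=> hf h0 hU.
have : (Ua *m RB <= \mxdiag_i CU i)%MS by apply/diag_subP => i; rewrite -mul_submxrow.
rewrite (eq_mxdiag h0) mxdiag0 submx0 mulmx_free_eq0 //; by move/eqP.
Qed.

End Blocks.

End MxL.

Section Conf.
Variable F : fieldType.

Lemma confC1 m m' (e : m' = m) (A B : 'M[F]_m') :
  (A + B == 1%:M)%MS -> (conform_mx (0 : 'M_m) A + conform_mx (0 : 'M_m) B == 1%:M)%MS.
Proof. by subst m'; rewrite !conform_mx_id. Qed.

Lemma confC2 m m' (e : m' = m) (A B : 'M[F]_m') :
  (A :&: B <= (0 : 'M_m'))%MS -> (conform_mx (0 : 'M_m) A :&: conform_mx (0 : 'M_m) B <= (0 : 'M_m))%MS.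
Proof. by subst m'; rewrite !conform_mx_id. Qed.

Lemma confC3 m m' (e : m' = m) (A : 'M[F]_m') : conform_mx (0 : 'M_m) A = 0 -> A = 0.
Proof. by subst m'; rewrite !conform_mx_id. Qed.

Lemma confC4 m m' p p' (e1 : m' = m) (e2 : p' = p) (A : 'M[F]_m') (B : 'M[F]_(m, p)) (C : 'M[F]_p') :
  (A *m conform_mx (0 : 'M_(m', p')) B <= C)%MS ->
  (conform_mx (0 : 'M_m) A *m B <= conform_mx (0 : 'M_p) C)%MS.
Proof. by subst m' p'; rewrite !conform_mx_id. Qed.

Lemma conform0 m n m' n' : conform_mx (0 : 'M[F]_(m, n)) (0 : 'M[F]_(m', n')) = 0.
Proof.
rewrite /conform_mx; do 2!case: eqP => // *; apply/matrixP => i j; by rewrite castmxE !mxE.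
Qed.

Lemma emb_le p (p_ : 'I_p -> nat) (B : forall i, 'M[F]_(p_ i)) j :
  (B j *m submxcol (1%:M : 'M[F]_(\sum_i p_ i)) j <= \mxdiag_i B i)%MS.
Proof.
apply/diag_subP => i; rewrite -mul_submxrow -submxblockEv.
rewrite -(mxdiagZ (p_ := p_) 1) mxblockK.
case: eqVneq => [<-|_]; last by rewrite mulmx0 sub0mx.
by rewrite conform_mx_id mulmx1 submx_refl.
Qed.

Lemma emb_block p (p_ : 'I_p -> nat) d (B : forall i, 'M[F]_(p_ i)) (A_ : forall i, 'M[F]_(p_ i, d)) j :
  (B j *m A_ j <= \mxdiag_i B i *m \mxcol_i A_ i)%MS.
Proof.
have -> : A_ j = submxcol (1%:M : 'M[F]_(\sum_i p_ i)) j *m \mxcol_i A_ i.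
  by rewrite submxcol_mul mul1mx mxcolK.
by rewrite mulmxA submxMr // emb_le.
Qed.

End Conf.

Section Transfer.
Variables (F : fieldType) (n : nat).
Implicit Types (X : rep F n) (u v a b : vertex n) (j : 'I_n).

Lemma dim_sigma_sinkE X a : sinkb X a -> dim (sigma X) a = \rank (kermx (in_mx X a)).
Proof. by move=> h; rewrite /= /sigma_dim h. Qed.

Lemma transfer X : indecomposable X -> nonzero (sigma X) ->
  (forall a, sinkb X a -> row_full (in_mx X a)) -> indecomposable (sigma X).
Proof.
move=> hX hnz hfull; split => // U' W' [hdec hmap].
pose C (Z : forall v, 'M[F]_(dim (sigma X) v)) v : 'M[F]_(dim X v) := conform_mx 0 (Z v).
pose L (Z : forall v, 'M[F]_(dim (sigma X) v)) v : 'M[F]_(dim X v) :=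
  if sinkb X v then <<(\mxdiag_j C Z (nb v j)) *m in_mx X v>>%MS else C Z v.
have hsrc : forall b, ~~ sinkb X b ->
    (C U' b + C W' b == 1%:M)%MS /\ (C U' b :&: C W' b <= (0 : 'M_(dim X b)))%MS.
  move=> b hb; have e := dim_sigma_src hb; have [h1 h2] := hdec b.
  by split; [exact: (confC1 e) | exact: (confC2 e)].
pose Ra a := row_base (kermx (in_mx X a)).
have hsink : forall (Z : forall v, 'M[F]_(dim (sigma X) v)) a, sinkb X a ->
    (forall u j, ~~ sinkb (sigma X) u -> (Z u *m amap (sigma X) u j <= Z (nb u j))%MS) ->
    forall j, (conform_mx (0 : 'M_(\rank (kermx (in_mx X a)))) (Z a) *m submxrow (Ra a) j
               <= C Z (nb a j))%MS.
  move=> Z a ha hZ j.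
  have := hZ a j; rewrite sinkb_sigma ha => /(_ isT); rewrite /= ha.
  apply: confC4; first by rewrite /sigma_dim ha.
  by rewrite /sigma_dim sinkb_nb ha.
have hUW : forall a, sinkb X a ->
    (conform_mx (0 : 'M_(\rank (kermx (in_mx X a)))) (U' a) +
     conform_mx (0 : 'M_(\rank (kermx (in_mx X a)))) (W' a) == 1%:M)%MS.
  move=> a ha; have [h1 _] := hdec a; exact: (confC1 (dim_sigma_sinkE ha)).
have hdecX : decomposition (L U') (L W').
  split.
    move=> v; rewrite /L; case: (boolP (sinkb X v)) => hv; last exact: hsrc.
    rewrite !(adds_eqmx (genmxE _) (genmxE _)) (cap_eqmx (genmxE _) (genmxE _)).
    apply: (@sink_alg F n (fun j => dim X (nb v j)) (dim X v) _ (in_mx X v) (Ra v) _ _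
      (conform_mx (0 : 'M_(\rank (kermx (in_mx X v)))) (U' v))
      (conform_mx (0 : 'M_(\rank (kermx (in_mx X v)))) (W' v))).
    - exact: hfull.
    - by rewrite /Ra eq_row_base submx_refl.
    - by rewrite /Ra eq_row_base submx_refl.
    - by move=> i; apply: hsrc; rewrite sinkb_nb hv.
    - exact: hUW.
    - by move=> i; apply: hsink => // u k hu; case: (hmap u k hu).
    - by move=> i; apply: hsink => // u k hu; case: (hmap u k hu).
  move=> u j hu; rewrite /L (negbTE hu) sinkb_nb hu /=.
  have key : forall (Z : forall v, 'M[F]_(dim (sigma X) v)),
      (C Z u *m amap X u j <= <<(\mxdiag_i C Z (nb (nb u j) i)) *m in_mx X (nb u j)>>)%MS.
    move=> Z; rewrite genmxE.
    apply: submx_trans (emb_block _ _ j).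
    move: (nbK u j); move: (nb (nb u j) j) => u' e; subst u'.
    by rewrite conform_mx_id submx_refl.
  by split; apply: key.
case: hX => _ hind.
have zero : forall (Z : forall v, 'M[F]_(dim (sigma X) v)),
    (forall u j, ~~ sinkb (sigma X) u -> (Z u *m amap (sigma X) u j <= Z (nb u j))%MS) ->
    (forall v, L Z v = 0) -> forall v, Z v = 0.
  move=> Z hZ h0 v.
  have hC : forall b, ~~ sinkb X b -> Z b = 0.
    move=> b hb; apply: (confC3 (dim_sigma_src hb)); have := h0 b.
    by rewrite /L (negbTE hb).
  case: (boolP (sinkb X v)) => hv; last exact: hC.
  apply: (confC3 (dim_sigma_sinkE hv)).
  apply: (@sink_zero F n (fun j => dim X (nb v j)) _ (Ra v) (fun i => C Z (nb v i))).
  - exact: row_base_free.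
  - by move=> i; rewrite /C (hC (nb v i)) ?conform0 // sinkb_nb hv.
  - by move=> i; apply: hsink.
case: (hind _ _ hdecX) => h; [left|right]; apply: zero => // u k hu; by case: (hmap u k hu).
Qed.

End Transfer.

Local Close Scope ring_scope.


Lemma ex_max (P : nat -> Prop) k0 N : P k0 -> (forall k, P k -> (k <= N)%N) ->
  exists m, P m /\ forall k, P k -> (k <= m)%N.
Proof.
elim: N k0 => [|N IH] k0 hk0 hb.
  exists k0; split => // k hk; have := hb _ hk; have := hb _ hk0; lia.
case: (classic (P N.+1)) => hN.
  by exists N.+1; split.
apply: (IH k0 hk0) => k hk; have := hb _ hk.
rewrite leq_eqVlt => /orP[/eqP E|//]; by move: hk; rewrite E.
Qed.

Section Main.
Variables (F : fieldType) (n : nat).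
Implicit Types (X Y : rep F n) (u v a b c h : vertex n) (j : 'I_n) (s t : seq (vertex n)).

Definition bounded X N := forall v, (0 < dim X v)%N -> (size (val v) <= N)%N.

Lemma tpath_size X N t : bounded X N -> tpath X t -> (size t <= N + N + 1)%N.
Proof.
case: t => [|x s] //= hb /and3P[hp /andP[hx hall] hnb].
have := walk_bound hp hnb.
have h1 := hb x hx.
have h2 : (size (val (last x s)) <= N)%N.
  apply: hb; have : last x s \in x :: s by exact: mem_last.
  have hall' : all (supp X) (x :: s) by rewrite /= hx.
  by move/(allP hall').
lia.
Qed.


Lemma diam_exists X N : bounded X N -> nonzero X -> exists s, diam_path X s.
Proof.
move=> hb [v hv].
have h0 : exists t, tpath X t /\ size t = 1%N.
  by exists [:: v]; rewrite /tpath /= /supp hv.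
have hB : forall k, (exists t, tpath X t /\ size t = k) -> (k <= N + N + 1)%N.
  by move=> k [t [ht <-]]; exact: tpath_size hb ht.
have [m [[t [ht <-]] hm]] := ex_max h0 hB.
by exists t; split => // t' ht'; apply: hm; exists t'.
Qed.

Lemma bounded_sigma X N : bounded X N -> bounded (sigma X) N.+1.
Proof.
move=> hb v hv; case: (boolP (sinkb X v)) => hs.
  have := leq_trans hv (dim_sigma_sink_le hs).
  rewrite lt0n sum_nat_eq0 => /forallPn[j]; rewrite -lt0n => /hb.
  by case: (size_nb v j) => ->; lia.
by move: hv; rewrite dim_sigma_src // => /hb; lia.
Qed.

Lemma nobt_tail x s : nobt (x :: s) -> nobt s.
Proof. by case: s => // y [|z s] //= /andP[]. Qed.

Lemma supp_src X v : ~~ sinkb X v -> supp (sigma X) v = supp X v.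
Proof. by move=> h; rewrite /supp dim_sigma_src. Qed.

Lemma inX X x s : indecomposable X -> path (@adj n) x s -> nobt (x :: s) ->
  all (supp (sigma X)) (x :: s) -> ~~ sinkb X x -> ~~ sinkb X (last x s) ->
  all (supp X) (x :: s).
Proof.
move=> hX; have [k] := ubnP (size s); elim: k s x => // k IH s x /ltnSE hk.
case: s hk => [|c [|w s]] hk /=.
- by rewrite !andbT => _ _ hx hs _; rewrite -supp_src.
- move=> /andP[/adjP[j ->] _] _ _ hx; by rewrite sinkb_nb hx.
move=> /and3P[/adjP[j1 ec] /adjP[j2 ew] hp] /andP[xw hnb] /and4P[hx hc hw hall] hxs hl.
have hc' : sinkb X c by rewrite ec sinkb_nb.
have hws : ~~ sinkb X w by rewrite ew sinkb_nb hc'.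
have := IH s w _ hp (@nobt_tail c (w :: s) hnb) _ hws hl.
rewrite /= -(supp_src hxs) hx /=.
have hk' : (size s < k)%N by move: hk => /=; lia.
move=> /(_ hk' (introT andP (conj hw hall))) /andP[hwX hallX].
rewrite hwX hallX !andbT.
rewrite /supp lt0n; apply/negP => /eqP hc0.
have ex : x = nb c j1 by rewrite ec nbK.
have hj : j1 != j2 by apply: contra xw => /eqP E; rewrite ex ew E.
case: (connected hX hc0 hj); rewrite -?ex -?ew => h0.
- by move: hx; rewrite (supp_src hxs) /supp h0.
- by move: hwX; rewrite /supp h0.
Qed.

Lemma nobt_ext c h P' : nobt (h :: P') -> c != head h P' -> nobt [:: c, h & P'].
Proof. by case: P' => // z P /= -> ->. Qed.

Lemma adj_nb u j : adj u (nb u j).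
Proof. by apply/adjP; exists j. Qed.

Lemma no_adj Y h : diam_path Y [:: h] ->
  forall u j, (0 < dim Y u)%N -> dim Y (nb u j) = 0%N.
Proof.
move=> [_ hd] u j hu; apply/eqP; rewrite -leqn0 leqNgt; apply/negP => hv.
have := hd [:: u; nb u j]; rewrite /tpath /= adj_nb /supp hu hv /= => /(_ isT).
by [].
Qed.

Lemma size1_zero Y h : indecomposable Y -> diam_path Y [:: h] -> sinkb Y h ->
  forall v, dim (sigma Y) v = 0%N.
Proof.
move=> hY hd hs; apply: sigma_zero => v hv.
have hh : (0 < dim Y h)%N by case: hd => /and3P[_ /andP[]].
apply: (single hY hh (no_adj hd)).
by apply: contraNneq hv => ->.
Qed.

Lemma odd_step (m1 m2 : nat) : odd m1 -> odd m2 -> (m1 < m2)%N -> (m1 + 2 <= m2)%N.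
Proof.
move=> ha hb hab.
have := odd_double_half m1; have := odd_double_half m2; rewrite ha hb -!addnn; lia.
Qed.

Lemma step X N sX : (2 <= n)%N -> indecomposable X -> indecomposable (sigma X) ->
  nonzero (sigma (sigma X)) -> bounded X N -> diam_path X sX -> odd (size sX) ->
  ~ flow_module (sigma X) -> ~ source_module (sigma X) ->
  exists P, [/\ diam_path (sigma X) P, odd (size P), (3 <= size P)%N & (size P + 2 <= size sX)%N].
Proof.
move=> hn hX hY hYY hb hsX hoX hfl hsr.
set Y := sigma X.
have [s0 hs0] := diam_exists (bounded_sigma hb) (proj1 hY).
have [P [hP hsk]] : exists P, diam_path Y P /\ (sinkb Y (head (root n) P) || sinkb Y (last (root n) P)).
  apply: NNPP => hne; apply: hsr; split; first by exists s0.
  move=> P hP; split; apply/negP => hk; apply: hne; exists P; by rewrite hk ?orbT.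
case: P hP hsk => [|h P'] hP hsk; first by case: hP.
have hev : ~~ odd (size P').
  by apply/negP => ho; apply: hfl; exists (h :: P').
have [htp hmax] := hP.
move: (htp) => /and3P[hpath hallY hnb].
have hpar := parity Y hpath; rewrite (negbTE hev) addbF in hpar.
move: hsk; rewrite /= hpar orbb => hhY.
have hhX : ~~ sinkb X h by rewrite -sinkb_sigma.
have hlX : ~~ sinkb X (last h P') by rewrite -sinkb_sigma hpar.
have hallX := inX hX hpath hnb hallY hhX hlX.
have htpX : tpath X (h :: P') by rewrite /tpath hpath hallX hnb.
have hle := proj2 hsX _ htpX.
have hoP : odd (size (h :: P')) by rewrite /= hev.
have hneq : size (h :: P') != size sX.
  apply/eqP => E.
  have [j hj] : exists j, nb h j != head h P'.
    pose j0 : 'I_n := Ordinal (ltn_trans (ltnSn 0) hn).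
    pose j1 : 'I_n := Ordinal hn.
    case: (eqVneq (nb h j0) (head h P')) => [E0|]; last by exists j0.
    exists j1; rewrite -E0; apply/negP => /eqP /nb_inj; by case.
  set c := nb h j.
  have hnbc : nobt [:: c, h & P'] by apply: nobt_ext.
  have hpc : path (@adj n) c (h :: P') by rewrite /= hpath andbT; apply/adjP; exists j; rewrite nbK.
  have hc0 : dim X c = 0%N.
    apply/eqP; rewrite -leqn0 leqNgt; apply/negP => hc.
    have : tpath X [:: c, h & P'].
      rewrite /tpath hpc hnbc andbT; apply/andP; split => //; apply/andP; split; [exact: hc | exact: hallX].
    by move/(proj2 hsX); rewrite -E /= ltnn.
  have hcs : sinkb X c by rewrite sinkb_nb hhX.
  have hcY : (0 < dim Y c)%N.
    apply: leq_trans (dim_sigma_sink_ge hcs); rewrite hc0 subn0.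
    apply: (@sum_pos n (fun i => dim X (nb c i)) j); rewrite /c nbK.
    by move: hallX => /andP[].
  have : tpath Y [:: c, h & P'].
    rewrite /tpath hpc hnbc andbT; apply/andP; split => //; apply/andP; split; [exact: hcY | exact: hallY].
  by move/hmax; rewrite /= ltnn.
have hlt : (size (h :: P') < size sX)%N by rewrite ltn_neqAle hneq hle.
exists (h :: P'); split => //.
- case E': P' => [|x [|y P'']].
  + exfalso; subst P'; case: hYY => v; by rewrite (size1_zero hY hP hhY).
  + by move: hev; rewrite E'.
  + by [].
- by apply: odd_step.
Qed.

End Main.

Lemma arith1 (m : nat) : ~~ odd m -> (2 <= m)%N -> (1 <= m./2)%N.
Proof. move=> ho h2; have := odd_double_half m; rewrite (negbTE ho) -addnn; lia. Qed.

Lemma arith2 (m p k : nat) : ~~ odd m -> (p + (k + k) <= m.+1)%N -> (3 <= p)%N -> (k < m./2)%N.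
Proof. move=> ho h1 h2; have := odd_double_half m; rewrite (negbTE ho) -addnn; lia. Qed.

Lemma arith3 (a b c k : nat) : (a + 2 <= b)%N -> (b + (k + k) <= c)%N -> (a + (k.+1 + k.+1) <= c)%N.
Proof. lia. Qed.

Theorem mainTheorem10 (F : fieldType) (n : nat) (hn : (3 <= n)%N)
  (M : rep F n) (s : seq (vertex n)) :
  fin_dim M -> indecomposable M -> regular M -> sink_module M ->
  diam_path M s ->
  let r := ((size s).-1)./2 in
  (1 <= r)%N /\
  exists i : nat, [/\ (1 <= i)%N, (i <= r)%N &
    (flow_module (iter i (@sigma F n) M) \/ source_module (iter i (@sigma F n) M))].
Proof.
move=> [L hL] hM hreg [_ hsink] hs r.
have hfwd : forall t, nonzero (iter t (@sigma F n) M) by move=> t; case: (hreg t).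
have hind : forall k, indecomposable (iter k (@sigma F n) M).
  elim=> [//|k IH]; exact: (transfer IH (hfwd k.+1) (surj IH (hfwd k.+1))).
pose N0 := (\max_(v <- L) size (val v))%N.
have hbnd : forall k, bounded (iter k (@sigma F n) M) (N0 + k).
  elim=> [|k IH].
    move=> v hv; rewrite addn0; apply: (@leq_bigmax_seq _ L xpredT (fun v => size (val v))) => //.
    by apply: contraTT hv => /hL ->.
  by rewrite addnS; exact: bounded_sigma.
case: s hs @r => [|x s'] hs r; first by case: hs => /=.
have [hsx hsl] := hsink _ hs.
have [htp hmax] := hs.
move: (htp) => /and3P[hpath hall hnb].
have := parity M hpath; rewrite hsl hsx /= => /esym /eqP; rewrite eqb_id => hev.
have hev' : ~~ odd (size s') by apply/negP => h; move: hev; rewrite h.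
have hs3 : (2 <= size s')%N.
  case E: s' => [|y [|z s'']].
  - exfalso; subst s'; case: (hfwd 1) => v; by rewrite (size1_zero hM hs hsx).
  - by move: hev'; rewrite E.
  - by [].
have hr : (1 <= r)%N by exact: arith1.
split => //.
apply: NNPP => hno.
have hno' : forall i, (1 <= i)%N -> (i <= r)%N ->
    ~ flow_module (iter i (@sigma F n) M) /\ ~ source_module (iter i (@sigma F n) M).
  move=> i h1 h2; split => h; apply: hno; exists i; split => //; by [left|right].
have claim : forall k, (k <= r)%N -> exists P,
    [/\ diam_path (iter k (@sigma F n) M) P, odd (size P), (3 <= size P)%N &
        (size P + (k + k) <= size (x :: s'))%N].
  elim=> [_|k IH hk].
    exists (x :: s'); split; [exact: hs | by rewrite /= hev' | by rewrite /= ltnS | by rewrite !addn0].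
  have [P [hP hoP h3P hsP]] := IH (ltnW hk).
  have [h1 h2] := hno' k.+1 isT hk.
  have [P' [hP' hoP' h3P' hsP']] :=
    step (ltnW hn) (hind k) (hind k.+1) (hfwd k.+2) (hbnd k) hP hoP h1 h2.
  exists P'; split => //; exact: arith3 hsP' hsP.
have [P [_ _ h3 hsz]] := claim r (leqnn r).
by have := arith2 hev' hsz h3; rewrite ltnn.
Qed.
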